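(* Let $3\le K\le N$, $M\in[0,N]$, and $\mathbf p$ with $p_1\ge\dots\ge p_N$. For every $\mathbf a\in\mathcal Q$ and every demand vector $\mathbf d\in[N]^K$ with $K$ pairwise distinct entries, $R_{\mathrm{MCCS}}(\mathbf d;\mathbf a)=R_{\mathrm{lb}}(\mathcal D(\mathbf d);\mathbf a)$. Consequently, restricting to demands with all-distinct requests (with probabilities $\prod_i p_{d_i}$ normalized over the set $\mathcal T_K$ of such demand vectors), $$\min_{\mathbf a\text{ feasible},\,\mathbf a\in\mathcal Q}\ \sum_{\mathbf d\in\mathcal T_K}\tfrac{\prod_i p_{d_i}}{Z}R_{\mathrm{MCCS}}(\mathbf d;\mathbf a)=\min_{\mathbf a\text{ feasible},\,\mathbf a\in\mathcal Q}\ \sum_{\mathbf d\in\mathcal T_K}\tfrac{\prod_i p_{d_i}}{Z}R_{\mathrm{lb}}(\mathcal D(\mathbf d);\mathbf a),$$ where $Z=\sum_{\mathbf d\in\mathcal T_K}\prod_i p_{d_i}$; i.e. the optimized MCCS attains the popularity-first-based lower bound (P2) in this regime.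
   Context: Setting: $N$ files with request probabilities $p_1\ge\dots\ge p_N$ ($\sum p_n=1$), all $p_n>0$ assumed so that $Z>0$; $K$ users, cache size $M$. $[m]=\{1,\dots,m\}$; $\binom{m}{l}=0$ if $l>m$ or $m<0$. For $\mathbf d\in[N]^K$, $\mathcal D(\mathbf d)$ is the set of distinct entries; $\mathcal T_K=\{\mathbf d\in[N]^K: |\mathcal D(\mathbf d)|=K\}$. A placement vector $\mathbf a=(a_{n,l})_{n\in[N],0\le l\le K}$ is feasible if (i) $a_{n,l}\ge0$; (ii) $\sum_{l=0}^K\binom{K}{l}a_{n,l}=1$ for each $n$; (iii) $\sum_{n=1}^N\sum_{l=1}^K\binom{K-1}{l-1}a_{n,l}\le M$. The popularity-first set is $\mathcal Q=\{\mathbf a: a_{n,l}\ge a_{n+1,l}\ \forall n\in[N-1],\ l\in[K]\}$. $R_{\mathrm{lb}}(\mathcal D;\mathbf a)=\max_{\pi}\sum_{l=0}^{K-1}\sum_{i=1}^{|\mathcal D|}\binom{K-i}{l}a_{\pi(i),l}$ over bijections $\pi:[|\mathcal D|]\to\mathcal D$. MCCS rate: for a demand $\mathbf d$, the leader group $\mathcal U(\mathbf d)\subseteq[K]$ consists of, for each file in $\mathcal D(\mathbf d)$, one user requesting it (say the smallest-index one); $R_{\mathrm{MCCS}}(\mathbf d;\mathbf a)=\sum_{\emptyset\ne\mathcal S\subseteq[K],\ \mathcal S\cap\mathcal U(\mathbf d)\ne\emptyset}\ \max_{k\in\mathcal S}a_{d_k,|\mathcal S|-1}$. (For $\mathbf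 d\in\mathcal T_K$, $\mathcal U(\mathbf d)=[K]$.) *)

(* Defs.v *)
From HB Require Import structures.
From mathcomp Require Import all_boot all_order all_algebra.
Set Implicit Arguments. Unset Strict Implicit. Unset Printing Implicit Defensive.
Import Order.TTheory GRing.Theory Num.Theory.
Local Open Scope ring_scope.

(* Files are indexed by 'I_N (file n+1 of the paper is the ordinal n),
   users by 'I_K, cache levels l by nat (only 0 <= l <= K matter).
   A placement vector is a : 'I_N -> nat -> R, a n l = a_{n+1,l}. *)

Section Defs.
Variable R : realFieldType.

Definition finmax (T : finType) (P : pred T) (f : T -> R) : R :=
  match [pick x | P x] with
  | Some x0 => \big[Num.max/f x0]_(x | P x) f x
  | None => 0
  end.

Variables N K : nat.

Definition feasible (M : R) (a : 'I_N -> nat -> R) : Prop :=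
  [/\ (forall (n : 'I_N) (l : nat), (l <= K)%N -> 0 <= a n l),
      (forall n : 'I_N, \sum_(l < K.+1) ('C(K, l))%:R * a n l = 1)
    & \sum_(n : 'I_N) \sum_(l < K.+1 | (0 < l)%N) ('C(K.-1, l.-1))%:R * a n l <= M].

Definition inQ (a : 'I_N -> nat -> R) : Prop :=
  forall (n n' : 'I_N) (l : nat), val n' = (val n).+1 -> (1 <= l <= K)%N ->
    a n' l <= a n l.

Definition Dset (d : {ffun 'I_K -> 'I_N}) : {set 'I_N} := [set d k | k : 'I_K].

Definition inT (d : {ffun 'I_K -> 'I_N}) : bool := injectiveb d.

(* lower bound: max over bijections pi : [|D|] -> D (0-indexed i stands for i+1) *)
Definition Rlb (D : {set 'I_N}) (a : 'I_N -> nat -> R) : R :=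
  finmax (fun pi : {ffun 'I_#|D| -> 'I_N} =>
            injectiveb pi && [forall i, pi i \in D])
         (fun pi => \sum_(l < K) \sum_(i < #|D|)
                      ('C(K - i.+1, l))%:R * a (pi i) l).

Definition leaders (d : {ffun 'I_K -> 'I_N}) : {set 'I_K} :=
  [set k : 'I_K | [forall k' : 'I_K, (k' < k)%N ==> (d k' != d k)]].

Definition Rmccs (d : {ffun 'I_K -> 'I_N}) (a : 'I_N -> nat -> R) : R :=
  \sum_(S : {set 'I_K} | (S != set0) && (S :&: leaders d != set0))
     finmax (fun k => k \in S) (fun k => a (d k) (#|S|.-1)).

Definition Zn (p : 'I_N -> R) : R :=
  \sum_(d : {ffun 'I_K -> 'I_N} | inT d) \prod_(i < K) p (d i).

Definition avg_Rmccs (p : 'I_N -> R) (a : 'I_N -> nat -> R) : R :=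
  \sum_(d : {ffun 'I_K -> 'I_N} | inT d)
     (\prod_(i < K) p (d i)) / Zn p * Rmccs d a.

Definition avg_Rlb (p : 'I_N -> R) (a : 'I_N -> nat -> R) : R :=
  \sum_(d : {ffun 'I_K -> 'I_N} | inT d)
     (\prod_(i < K) p (d i)) / Zn p * Rlb (Dset d) a.

Definition is_min (P : ('I_N -> nat -> R) -> Prop)
    (f : ('I_N -> nat -> R) -> R) (v : R) : Prop :=
  (exists a, P a /\ f a = v) /\ (forall a, P a -> v <= f a).

End Defs.

(* Main.v *)
Require Import Defs.
From HB Require Import structures.
From mathcomp Require Import all_boot all_order all_algebra.
From mathcomp Require Import zify.
Import Order.TTheory GRing.Theory Num.Theory.
Local Open Scope ring_scope.
Set Implicit Arguments. Unset Strict Implicit.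

Lemma finmax_ge (R : realFieldType) (T : finType) (P : pred T) (f : T -> R) x :
  P x -> f x <= finmax P f.
Proof.
move=> Px; rewrite /finmax; case: pickP => [x1 Px1|none]; last by rewrite none in Px.
by rewrite (bigD1 x) //= le_max lexx.
Qed.

Lemma finmax_eq (R : realFieldType) (T : finType) (P : pred T) (f : T -> R) v :
  (exists2 x, P x & f x = v) -> (forall x, P x -> f x <= v) -> finmax P f = v.
Proof.
move=> [x0 Px0 <-] hle; apply/eqP; rewrite eq_le finmax_ge // andbT.
rewrite /finmax; case: pickP => [x1 Px1|none]; last by rewrite none in Px0.
apply: (big_ind (fun y => y <= f x0)); first exact: hle.
  by move=> y z hy hz; rewrite ge_max hy hz.
by [].
Qed.

Lemma card_gtord K m : #|[set j : 'I_K | (m < j)%N]| = (K - m.+1)%N.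
Proof.
rewrite -sum1_card big_mkcond /=.
rewrite (eq_bigr (fun j : 'I_K => nat_of_bool (m < j)%N)); last first.
  by move=> j _; rewrite inE; case: ltnP.
rewrite -(big_mkord xpredT (fun j => nat_of_bool (m < j)%N)).
elim: K => [|K IH]; first by rewrite big_geq.
rewrite big_nat_recr //= IH; case: ltnP => /= h; lia.
Qed.
Lemma sum_subsets_card (R : realFieldType) K (T : finType) (A : {set T}) (c : nat -> R) :
  (#|A| < K)%N ->
  \sum_(l < K) ('C(#|A|, l))%:R * c l = \sum_(B : {set T} | B \subset A) c #|B|.
Proof.
case: K => // K hA.
rewrite (partition_big (fun B : {set T} => (inord #|B| : 'I_K.+1)) xpredT) //=.
apply: eq_bigr => l _.
have cB : forall B : {set T}, B \subset A -> (#|B| < K.+1)%N.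
  by move=> B sB; exact: (leq_ltn_trans (subset_leq_card sB) hA).
rewrite (eq_bigr (fun _ => c l)); last first.
  by move=> B /andP[sB /eqP <-]; rewrite inordK // cB.
rewrite sumr_const -cards_draws mulr_natl; congr (_ *+ _).
apply: eq_card => B; rewrite !inE -topredE /=; case sB: (B \subset A) => //=.
have := cB _ sB => hB.
apply/eqP/eqP => [E|E]; first by apply: val_inj; rewrite /= inordK.
by rewrite -E inordK.
Qed.

Lemma sum_first (R : realFieldType) K (tau : 'I_K -> nat) (tinj : injective tau)
  (F : {set 'I_K} -> R) :
  \sum_(k : 'I_K) \sum_(T : {set 'I_K} | T \subset [set v | (tau k < tau v)%N]) F (k |: T)
  = \sum_(S : {set 'I_K} | S != set0) F S.
Proof.
pose P k (S : {set 'I_K}) := (k \in S) && (S :\ k \subset [set v | (tau k < tau v)%N]).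
have step1 : forall k, \sum_(T : {set 'I_K} | T \subset [set v | (tau k < tau v)%N]) F (k |: T)
   = \sum_(S | P k S) F S.
  move=> k.
  rewrite [RHS](reindex_onto (fun T => k |: T) (fun S => S :\ k)); last first.
    by move=> S; rewrite /P => /andP[kS _]; rewrite setD1K.
  apply: esym.
  apply: eq_bigl => T; rewrite /P setU11 /=.
  have kT : T \subset [set v | (tau k < tau v)%N] -> k \notin T.
    by move=> sT; apply/negP => /(subsetP sT); rewrite inE ltnn.
  case sT: (T \subset _).
    have E : (k |: T) :\ k = T.
      apply/setP => v; rewrite !inE; case: eqP => // ->.
      by rewrite (negbTE (kT sT)).
    by rewrite E sT eqxx.
  apply/negP => /andP[s2 /eqP E]; by rewrite E sT in s2.
rewrite (eq_bigr _ (fun k _ => step1 k)).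
under eq_bigr do rewrite big_mkcond.
rewrite exchange_big /= [RHS]big_mkcond /=.
apply: eq_bigr => S _.
case: (set_0Vmem S) => [->|[x xS]].
  rewrite eqxx; apply: big1 => k _; by rewrite /P inE.
have -> : (S != set0) by apply/set0Pn; exists x.
case: (arg_minnP tau xS) => k0 k0S k0min.
have Pk0 : P k0 S.
  have k0S' : k0 \in S := k0S.
  rewrite /P k0S'; apply/subsetP => v; rewrite !inE => /andP[vk vS].
  rewrite ltn_neqAle (k0min v vS) andbT; apply/negP => /eqP /tinj E.
  by rewrite E eqxx in vk.
rewrite (bigD1 k0) //= Pk0 big1 ?addr0 // => k kk0.
case Pk: (P k S) => //.
move: Pk Pk0; rewrite /P => /andP[kS /subsetP s1] /andP[_ /subsetP s2].
have h1 : k0 \in S :\ k by rewrite !inE eq_sym kk0.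
have h2 : k \in S :\ k0 by rewrite !inE kk0.
move: (s1 _ h1) (s2 _ h2); rewrite !inE => a b.
by move: (ltn_trans a b); rewrite ltnn.
Qed.

Lemma inQ_mono (R : realFieldType) N K (a : 'I_N -> nat -> R) :
  inQ K a -> forall (n n' : 'I_N) l, (n <= n')%N -> (1 <= l <= K)%N -> a n' l <= a n l.
Proof.
move=> hQ n n' l le hl.
have H : forall m (n'' : 'I_N), val n'' = (val n + m)%N -> a n'' l <= a n l.
  elim=> [|m IH] n'' e.
    by have -> : n'' = n by apply: val_inj; rewrite e addn0.
  have lt : (n + m < N)%N by have := ltn_ord n''; rewrite e addnS; apply: ltnW.
  apply: le_trans (IH (Ordinal lt) erefl).
  by apply: hQ => //=; rewrite e addnS.
by apply: (H (n' - n)%N); rewrite subnKC.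
Qed.

Lemma card_above K (tau : 'I_K -> 'I_K) (tinj : injective tau) k :
  #|[set v | (tau k < tau v)%N]| = (K - (tau k).+1)%N.
Proof.
rewrite -card_gtord -(card_preimset [set j : 'I_K | (tau k < j)%N] tinj).
by apply: eq_card => v; rewrite !inE.
Qed.

Definition valpi (R : realFieldType) N K (a : 'I_N -> nat -> R) (pi : {ffun 'I_K -> 'I_N}) :=
  \sum_(l < K) \sum_(i < K) ('C(K - i.+1, l))%:R * a (pi i) l.

Lemma valpiE (R : realFieldType) N K (a : 'I_N -> nat -> R) (d pi : {ffun 'I_K -> 'I_N})
  (tau : 'I_K -> 'I_K) : injective tau -> (forall k, pi (tau k) = d k) ->
  valpi a pi = \sum_(k : 'I_K) \sum_(T : {set 'I_K} | T \subset [set v | (tau k < tau v)%N])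
                  a (d k) #|T|.
Proof.
move=> tinj hpi; rewrite /valpi.
rewrite (eq_bigr (fun l : 'I_K => \sum_(k < K) ('C(K - (tau k).+1, l))%:R * a (d k) l));
  last first.
  move=> l _; rewrite (reindex tau) /=; last exact: onW_bij (injF_bij tinj).
  by apply: eq_bigr => k _; rewrite hpi.
rewrite exchange_big /=; apply: eq_bigr => k _.
rewrite -(@sum_subsets_card _ K _ _ (fun l => a (d k) l)) ?card_above //.
have := ltn_ord (tau k); lia.
Qed.

Lemma leaders_inj N K (d : {ffun 'I_K -> 'I_N}) : injective d -> leaders d = setT.
Proof.
move=> dinj; apply/setP => k; rewrite !inE; apply/forallP => k'; apply/implyP => lt.
apply/negP => /eqP /dinj E; by rewrite E ltnn in lt.
Qed.

Lemma RmccsE (R : realFieldType) N K (a : 'I_N -> nat -> R) (d : {ffun 'I_K -> 'I_N})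
  (tau : 'I_K -> 'I_K) : injective d -> injective tau ->
  Rmccs d a = \sum_(k : 'I_K) \sum_(T : {set 'I_K} | T \subset [set v | (tau k < tau v)%N])
                  finmax (fun v => v \in k |: T) (fun v => a (d v) #|T|).
Proof.
move=> dinj tinj; rewrite /Rmccs leaders_inj //.
rewrite (eq_bigl (fun S : {set 'I_K} => S != set0)); last by move=> S; rewrite setIT andbb.
have vinj : injective (fun k => val (tau k)) by move=> x y /val_inj /tinj.
rewrite -(sum_first vinj (fun S => finmax (fun k => k \in S) (fun k => a (d k) #|S|.-1))).
apply: eq_bigr => k _; apply: eq_bigr => T sT.
rewrite cardsU1.
have -> : k \notin T by apply/negP => /(subsetP sT); rewrite inE ltnn.
by [].
Qed.

Definition rkn N K (d : {ffun 'I_K -> 'I_N}) (k : 'I_K) : nat :=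
  #|[set u | (val (d u) < val (d k))%N]|.

Lemma rkn_lt N K (d : {ffun 'I_K -> 'I_N}) k : (rkn d k < K)%N.
Proof.
rewrite /rkn -[X in (_ < X)%N]card_ord -cardsT; apply: proper_card; apply/properP.
by split; [apply: subsetT | exists k; rewrite !inE ?ltnn].
Qed.

Definition rk N K (d : {ffun 'I_K -> 'I_N}) (k : 'I_K) : 'I_K := Ordinal (rkn_lt d k).

Lemma rk_mono N K (d : {ffun 'I_K -> 'I_N}) u k :
  (val (d u) < val (d k))%N -> (rk d u < rk d k)%N.
Proof.
move=> lt; rewrite /= /rkn; apply: proper_card; apply/properP; split.
  by apply/subsetP => w; rewrite !inE => h; apply: ltn_trans h lt.
by exists u; rewrite !inE ?ltnn.
Qed.

Lemma rk_inv N K (d : {ffun 'I_K -> 'I_N}) u k : injective d ->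
  (rk d u < rk d k)%N -> (val (d u) < val (d k))%N.
Proof.
move=> dinj lt; case: (ltngtP (val (d u)) (val (d k))) => // h.
  by move: (rk_mono h) => h2; move: (ltn_trans lt h2); rewrite ltnn.
have E : u = k by apply: dinj; apply: val_inj; rewrite h.
by rewrite E ltnn in lt.
Qed.

Lemma rk_inj N K (d : {ffun 'I_K -> 'I_N}) : injective d -> injective (rk d).
Proof.
move=> dinj u k E; case: (ltngtP (val (d u)) (val (d k))) => h.
- by move: (rk_mono h); rewrite E ltnn.
- by move: (rk_mono h); rewrite E ltnn.
- by apply: dinj; apply: val_inj.
Qed.

Lemma part1 (R : realFieldType) N K (a : 'I_N -> nat -> R) :
  inQ K a -> forall d : {ffun 'I_K -> 'I_N}, inT d -> Rmccs d a = Rlb K (Dset d) a.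
Proof.
move=> hQ d /injectiveP dinj.
rewrite /Rlb.
match goal with |- context [ ('I_?m) ] => have cD : m = K; [by rewrite card_imset // card_ord | move: m cD] end.
move=> m cD; subst m.
apply: esym; apply: finmax_eq.
  have rinj := rk_inj dinj.
  pose pi0 := [ffun i => d (invF rinj i)].
  exists pi0.
    apply/andP; split.
      apply/injectiveP => i j; rewrite !ffunE => /dinj.
      exact: (can_inj (f_invF rinj)).
    by apply/forallP => i; rewrite ffunE; apply: imset_f.
  change (valpi a pi0 = Rmccs d a).
  rewrite (@valpiE _ _ _ a d pi0 (rk d)) //; last by move=> k; rewrite ffunE invF_f.
  rewrite (@RmccsE _ _ _ a d (rk d)) //.
  apply: eq_bigr => k _; apply: eq_bigr => T sT; apply: esym; apply: finmax_eq.
    by exists k; rewrite ?setU11.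
  move=> v; rewrite in_setU1 => /predU1P [->|vT]; first exact: lexx.
  apply: (inQ_mono hQ).
    by apply: ltnW; apply: (rk_inv dinj); move: (subsetP sT v vT); rewrite inE.
  apply/andP; split; first by rewrite card_gt0; apply/set0Pn; exists v.
  by rewrite -[X in (_ <= X)%N](card_ord K) max_card.
move=> pi /andP[/injectiveP piinj /forallP piD].
pose tau k := odflt k [pick i | pi i == d k].
have hpi : forall k, pi (tau k) = d k.
  move=> k; rewrite /tau; case: pickP => [i /eqP //|none].
  have sub : [set pi i | i : 'I_K] \subset Dset d.
    by apply/subsetP => x /imsetP [i _ ->]; apply: piD.
  have cc : #|[set pi i | i : 'I_K]| = #|Dset d|.
    by rewrite card_imset // card_ord card_imset // card_ord.
  have eqAB := elimT (subset_cardP cc) sub.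
  have : d k \in [set pi i | i : 'I_K] by rewrite eqAB imset_f.
  case/imsetP => i _ E.
  by move: (none i); rewrite E eqxx.
have tinj : injective tau.
  by move=> u k E; apply: dinj; rewrite -!hpi E.
change (valpi a pi <= Rmccs d a).
rewrite (@valpiE _ _ _ a d pi tau) // (@RmccsE _ _ _ a d tau) //.
apply: ler_sum => k _; apply: ler_sum => T _; apply: finmax_ge; exact: setU11.
Qed.

Lemma is_min_ext (R : realFieldType) N (P : ('I_N -> nat -> R) -> Prop) f g v :
  (forall a, P a -> f a = g a) -> (is_min P f v <-> is_min P g v).
Proof.
move=> E; split=> [[[a [Pa fa]] hm]|[[a [Pa fa]] hm]]; split.
- by exists a; rewrite -E.
- by move=> b Pb; rewrite -E //; apply: hm.
- by exists a; rewrite E.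
- by move=> b Pb; rewrite E //; apply: hm.
Qed.

Unset Implicit Arguments.

Theorem theorem3 (R : realFieldType) (N K : nat) (M : R) (p : 'I_N -> R) :
  (3 <= K)%N -> (K <= N)%N -> 0 <= M -> M <= N%:R ->
  (forall n : 'I_N, 0 < p n) ->
  \sum_(n : 'I_N) p n = 1 ->
  (forall n n' : 'I_N, (n <= n')%N -> p n' <= p n) ->
  (forall (a : 'I_N -> nat -> R), inQ K a ->
     forall d : {ffun 'I_K -> 'I_N}, inT d ->
       Rmccs d a = Rlb K (Dset d) a)
  /\
  (forall v : R,
     is_min (fun a => feasible K M a /\ inQ K a) (avg_Rmccs K p) v <->
     is_min (fun a => feasible K M a /\ inQ K a) (avg_Rlb K p) v).
Proof.
move=> _ _ _ _ _ _ _; split; first exact: part1.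
move=> v; apply: is_min_ext => a [_ hQ].
rewrite /avg_Rmccs /avg_Rlb; apply: eq_bigr => d hd.
by rewrite part1.
Qed.
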